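(* Let $G=(X,\Sigma,\longrightarrow,X_0)$ be a plant, $R_i=(Z_i,\Sigma,\longrightarrow,Z_{0i})$ ($i=1,2$) specifications with $R_1\sqsubseteq R_2$, and $\Sigma'=\{\sigma\in\Sigma:z_1\xrightarrow{\sigma}\text{ in }R_1\text{ for some }z_1\in Z_1\}$. Take $\Sigma_r=\Sigma'$ and let $S\in\mathit{SPR}(G,R_2)$. If there exists a cc-simulation $\Phi$ from $S\|G$ to $R_2$ such that $\Phi^{-1}$ is a simulation from $R_2$ to $S\|G$ w.r.t. $\Sigma'$, then $S\in S(R_1,G,R_2)$. In particular, $\mathit{SPR}(G,R_2)\subseteq S(R_1,G,R_2)$ whenever $|Z_{02}|=1$.
   Context: An automaton is a 4-tuple $A=(Q,\Sigma,\longrightarrow,Q_0)$ with state set $Q$, finite event set $\Sigma$, ${\longrightarrow}\subseteq Q\times\Sigma\times Q$ and $\emptyset\neq Q_0\subseteq Q$. Write $q\xrightarrow{\sigma}q'$ for $(q,\sigma,q')\in{\longrightarrow}$, $q\xrightarrow{\sigma}$ if some such $q'$ exists; extend to strings. A state is reachable if reached from an initial state by some string. Events are partitioned into uncontrollable $\Sigma_{uc}$ and controllable $\Sigma_c$; $\Sigma_r\subseteq\Sigma$ denotes the set of required events. For a supervisor $S=(Y,\Sigma,\longrightarrow,Y_0)$, $S\|G=(Y\times X,\Sigma,\longrightarrow,Y_0\times X_0)$ with $(y,x)\xrightarrow{\sigma}(y',x')$ iff $y\xrightarrow{\sigma}y'$ and $x\xrightarrow{\sigma}x'$; $S$ is $\Sigma_{uc}$-admissible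 w.r.t. $G$ if for every reachable $(y,x)$ of $S\|G$ and $\sigma\in\Sigma_{uc}$, $x\xrightarrow{\sigma}$ implies $(y,x)\xrightarrow{\sigma}$. For automata $A_1,A_2$ (state sets $Q_1,Q_2$, initial sets $Q_{01},Q_{02}$) and $\Sigma''\subseteq\Sigma$, $\Phi\subseteq Q_1\times Q_2$ is a simulation w.r.t. $\Sigma''$ if (initial state) every $q_0\in Q_{01}$ has $p_0\in Q_{02}$ with $(q_0,p_0)\in\Phi$ and (forward) for $(q,p)\in\Phi$, $\sigma\in\Sigma''$, $q\xrightarrow{\sigma}q'$ there is $p'$ with $p\xrightarrow{\sigma}p'$, $(q',p')\in\Phi$; a simulation is a simulation w.r.t. $\Sigma$; a cc-simulation is a simulation that also satisfies ($\Sigma_r$-backward): for $(q,p)\in\Phi$, $\sigma\in\Sigma_r$, $p\xrightarrow{\sigma}p'$ there is $q'$ with $q\xrightarrow{\sigma}q'$, $(q',p')\in\Phi$. $A_1\sqsubseteq A_2$, $A_1\sqsubseteq_{cc}A_2$ mean such relations exist; $\Phi^{-1}=\{(p,q):(q,p)\in\Phi\}$. $\mathit{SPR}(G,R)$ is the set of $\Sigma_{uc}$-admissible supervisors $S$ with $S\|G\sqsubseteq_{cc}R$. $S(R_1,G,R_2)$ is the set of all $\Sigma_{uc}$-admissible supervisors $S$ with $R_1\sqsubseteq S\|G\sqsubseteq R_2$ (the $\Sigma_{uc}$-admissible solutions of the $(R_1,G,R_2)$-range control problem). *)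

(* Defs.v *)
From mathcomp Require Import all_boot.

Set Implicit Arguments.
Unset Strict Implicit.
Unset Printing Implicit Defensive.

Record automaton (E : finType) := Automaton {
  st : Type;
  trans : st -> E -> st -> Prop;
  init : st -> Prop;
  init_ne : exists q, init q
}.
Arguments st {E} a.
Arguments trans {E} a _ _ _.
Arguments init {E} a _.

Section Defs.
Variable E : finType.

Inductive reachable (A : automaton E) : st A -> Prop :=
| reach_init q : init A q -> @reachable A q
| reach_step q s q' : @reachable A q -> trans A q s q' -> @reachable A q'.
Arguments reachable : clear implicits.

Definition par_init (S G : automaton E) : exists p : st S * st G,
    init S p.1 /\ init G p.2.
Proof.
case: (init_ne S) => y Hy; case: (init_ne G) => x Hx.
by exists (y, x).
Qed.

Definition par (S G : automaton E) : automaton E :=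
  @Automaton E (st S * st G)
    (fun p s p' => trans S p.1 s p'.1 /\ trans G p.2 s p'.2)
    (fun p => init S p.1 /\ init G p.2)
    (par_init S G).

(* Sigma_uc-admissibility of supervisor S w.r.t. plant G;
   Euc is the set of uncontrollable events. *)
Definition admissible (Euc : (E -> Prop)) (S G : automaton E) : Prop :=
  forall (y : st S) (x : st G), reachable (par S G) (y, x) ->
  forall s, Euc s -> (exists x', trans G x s x') ->
  exists p', trans (par S G) (y, x) s p'.

Definition simulation_wrt (E'' : (E -> Prop)) (A1 A2 : automaton E)
  (Phi : st A1 -> st A2 -> Prop) : Prop :=
  (forall q0, init A1 q0 -> exists p0, init A2 p0 /\ Phi q0 p0) /\
  (forall q p, Phi q p -> forall s, E'' s -> forall q', trans A1 q s q' ->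
     exists p', trans A2 p s p' /\ Phi q' p').

Definition simulation (A1 A2 : automaton E) (Phi : st A1 -> st A2 -> Prop) :=
  simulation_wrt (fun _ => True) Phi.

Definition cc_simulation (Er : (E -> Prop)) (A1 A2 : automaton E)
  (Phi : st A1 -> st A2 -> Prop) : Prop :=
  simulation Phi /\
  (forall q p, Phi q p -> forall s, Er s -> forall p', trans A2 p s p' ->
     exists q', trans A1 q s q' /\ Phi q' p').

Definition simulated (A1 A2 : automaton E) : Prop :=
  exists Phi : st A1 -> st A2 -> Prop, simulation Phi.

Definition cc_simulated (Er : (E -> Prop)) (A1 A2 : automaton E) : Prop :=
  exists Phi : st A1 -> st A2 -> Prop, cc_simulation Er Phi.

Definition inverse (A1 A2 : automaton E) (Phi : st A1 -> st A2 -> Prop) :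
  st A2 -> st A1 -> Prop := fun p q => Phi q p.

Definition SPR (Euc Er : (E -> Prop)) (G R S : automaton E) : Prop :=
  admissible Euc S G /\ cc_simulated Er (par S G) R.

Definition range_sol (Euc : (E -> Prop)) (R1 G R2 S : automaton E) : Prop :=
  admissible Euc S G /\ simulated R1 (par S G) /\ simulated (par S G) R2.

Definition enabled_events (R1 : automaton E) : (E -> Prop) :=
  fun s => exists z1 z1', trans R1 z1 s z1'.

End Defs.

(* Main.v *)
Require Import Defs.
From mathcomp Require Import all_boot.

Theorem proposition3 (E : finType) (Euc : E -> Prop) (G R1 R2 : automaton E) :
  simulated R1 R2 ->
  (forall S : automaton E,
     SPR Euc (enabled_events R1) G R2 S ->
     (exists Phi : st (par S G) -> st R2 -> Prop,
        cc_simulation (enabled_events R1) Phi /\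
        simulation_wrt (enabled_events R1) (inverse Phi)) ->
     range_sol Euc R1 G R2 S) /\
  ((exists z0 : st R2, forall z, init R2 z <-> z = z0) ->
   forall S : automaton E,
     SPR Euc (enabled_events R1) G R2 S -> range_sol Euc R1 G R2 S).
Proof.
move=> [Psi [Psi0 Psi1]]; split.
- move=> S [Hadm _] [Phi [[[Phi0 Phi1] Phib] [Inv0 Inv1]]].
  split; first exact: Hadm.
  split; last by exists Phi; split.
  exists (fun z1 q => exists z2, Psi z1 z2 /\ Phi q z2); split.
  + move=> z1 Hz1; have [z2 [Hz2 Pz]] := Psi0 z1 Hz1.
    have [q [Hq Pq]] := Inv0 z2 Hz2.
    by exists q; split => //; exists z2.
  + move=> z1 q [z2 [Pz Pq]] s _ z1' Ht.
    have Hs : enabled_events R1 s by exists z1, z1'.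
    have [z2' [Ht2 Pz']] := Psi1 z1 z2 Pz s I z1' Ht.
    have [q' [Htq Pq']] := Inv1 z2 q Pq s Hs z2' Ht2.
    by exists q'; split => //; exists z2'.
- move=> [z0 Hz0] S [Hadm [Phi [[Phi0 Phi1] Phib]]].
  split; first exact: Hadm.
  split; last by exists Phi; split.
  exists (fun z1 q => exists z2, Psi z1 z2 /\ Phi q z2); split.
  + move=> z1 Hz1; have [z2 [Hz2 Pz]] := Psi0 z1 Hz1.
    have [q0 Hq0] := init_ne (par S G).
    have [p0 [Hp0 Pp0]] := Phi0 q0 Hq0.
    exists q0; split => //; exists z2; split => //.
    by move/Hz0: Hz2 => ->; move/Hz0: Hp0 => <-.
  + move=> z1 q [z2 [Pz Pq]] s _ z1' Ht.
    have Hs : enabled_events R1 s by exists z1, z1'.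
    have [z2' [Ht2 Pz']] := Psi1 z1 z2 Pz s I z1' Ht.
    have [q' [Htq Pq']] := Phib q z2 Pq s Hs z2' Ht2.
    by exists q'; split => //; exists z2'.
Qed.
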